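(* Let $\mathcal{C}$ be a triangulated category with translation functor $\Sigma$. (1) Suppose $\rho$ assigns to each morphism $f$ of $\mathcal{C}$ a real number $\rho(f)\geq0$ such that (M1) $\rho(\Sigma f)=\rho(f)$; (M2) $\rho(f\oplus g)=\rho(f)+\rho(g)$; (M3) for every exact triangle $X\xrightarrow{f}Y\xrightarrow{g}Z\rightsquigarrow$, $\rho(f)+\rho(g)=\rho(\mathrm{id}_Y)$. Then the function on objects $X\mapsto\rho(\mathrm{id}_X)$ is nonnegative and satisfies (O1) $\rho(\Sigma X)=\rho(X)$; (O2) $\rho(X\oplus Y)=\rho(X)+\rho(Y)$; (O3) for every exact triangle $X\to Y\to Z\rightsquigarrow$, $\rho(Y)\leq\rho(X)+\rho(Z)$. (2) Conversely, if $\rho$ assigns to each object a real number $\rho(X)\geq0$ satisfying (O1), (O2), (O3), then the assignment $\rho(f:X\to Y)=\frac{\rho(X)+\rho(Y)-\rho(\operatorname{cone}(f))}{2}$ is a nonnegative function on morphisms satisfying (M1), (M2), (M3). *)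

(* Defs.v *)
From HB Require Import structures.
From mathcomp Require Import all_boot all_algebra.
Set Implicit Arguments. Unset Strict Implicit. Unset Printing Implicit Defensive.
Import GRing.Theory Num.Theory.
Local Open Scope ring_scope.

Record AddShiftCat := {
  Obj : Type;
  Mor : Obj -> Obj -> zmodType;
  idm : forall X, Mor X X;
  comp : forall X Y Z, Mor Y Z -> Mor X Y -> Mor X Z;
  comp_assoc : forall X Y Z W (h : Mor Z W) (g : Mor Y Z) (f : Mor X Y),
      comp h (comp g f) = comp (comp h g) f;
  comp_idl : forall X Y (f : Mor X Y), comp (idm Y) f = f;
  comp_idr : forall X Y (f : Mor X Y), comp f (idm X) = f;
  comp_addl : forall X Y Z (g g' : Mor Y Z) (f : Mor X Y),
      comp (g + g') f = comp g f + comp g' f;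
  comp_addr : forall X Y Z (g : Mor Y Z) (f f' : Mor X Y),
      comp g (f + f') = comp g f + comp g f';
  zobj : Obj;
  zobj_id : idm zobj = 0;
  bsum : Obj -> Obj -> Obj;
  bin1 : forall X Y, Mor X (bsum X Y);
  bin2 : forall X Y, Mor Y (bsum X Y);
  bpr1 : forall X Y, Mor (bsum X Y) X;
  bpr2 : forall X Y, Mor (bsum X Y) Y;
  bpr1_in1 : forall X Y, comp (bpr1 X Y) (bin1 X Y) = idm X;
  bpr2_in2 : forall X Y, comp (bpr2 X Y) (bin2 X Y) = idm Y;
  bpr1_in2 : forall X Y, comp (bpr1 X Y) (bin2 X Y) = 0;
  bpr2_in1 : forall X Y, comp (bpr2 X Y) (bin1 X Y) = 0;
  bsum_id : forall X Y,
      comp (bin1 X Y) (bpr1 X Y) + comp (bin2 X Y) (bpr2 X Y) = idm (bsum X Y);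
  (* translation functor Sigma: additive, fully faithful, essentially surjective *)
  Sh : Obj -> Obj;
  ShH : forall X Y, Mor X Y -> Mor (Sh X) (Sh Y);
  ShH_id : forall X, ShH (idm X) = idm (Sh X);
  ShH_comp : forall X Y Z (g : Mor Y Z) (f : Mor X Y),
      ShH (comp g f) = comp (ShH g) (ShH f);
  ShH_add : forall X Y (f g : Mor X Y), ShH (f + g) = ShH f + ShH g;
  ShH_inj : forall X Y (f g : Mor X Y), ShH f = ShH g -> f = g;
  ShH_surj : forall X Y (g : Mor (Sh X) (Sh Y)), exists f : Mor X Y, ShH f = g;
  Sh_esurj : forall Y, exists X (u : Mor (Sh X) Y) (v : Mor Y (Sh X)),
      comp v u = idm (Sh X) /\ comp u v = idm Y
}.

Arguments idm {_} X.
Arguments comp {_ X Y Z}.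
Arguments zobj {_}.
Arguments bsum {_}.
Arguments bin1 {_ X Y}.
Arguments bin2 {_ X Y}.
Arguments bpr1 {_ X Y}.
Arguments bpr2 {_ X Y}.
Arguments Sh {_}.
Arguments ShH {_ X Y}.

Section Defs1.
Variable C : AddShiftCat.

Definition is_iso (X Y : Obj C) (a : Mor X Y) : Prop :=
  exists b : Mor Y X, comp b a = idm X /\ comp a b = idm Y.

Definition dsum_hom (X Y X' Y' : Obj C) (f : Mor X Y) (g : Mor X' Y')
  : Mor (bsum X X') (bsum Y Y') :=
  comp bin1 (comp f bpr1) + comp bin2 (comp g bpr2).

Definition tri_iso (X Y Z X' Y' Z' : Obj C)
  (f : Mor X Y) (g : Mor Y Z) (h : Mor Z (Sh X))
  (f' : Mor X' Y') (g' : Mor Y' Z') (h' : Mor Z' (Sh X')) : Prop :=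
  exists (a : Mor X X') (b : Mor Y Y') (c : Mor Z Z'),
    [/\ is_iso a, is_iso b & is_iso c] /\
    [/\ comp b f = comp f' a, comp c g = comp g' b
       & comp (ShH a) h = comp h' c].
End Defs1.

Arguments is_iso {_ X Y}.
Arguments dsum_hom {_ X Y X' Y'}.

(* Triangulated category: axioms TR1 (isomorphism closure, identity triangle,
   existence of cones -- here as a chosen cone), TR2 (rotation),
   TR3 (morphism completion) and TR4 (octahedral axiom). *)
Record TriCat := {
  base :> AddShiftCat;
  dist : forall (X Y Z : Obj base), Mor X Y -> Mor Y Z -> Mor Z (Sh X) -> Prop;
  dist_iso : forall (X Y Z X' Y' Z' : Obj base)
      (f : Mor X Y) (g : Mor Y Z) (h : Mor Z (Sh X))
      (f' : Mor X' Y') (g' : Mor Y' Z') (h' : Mor Z' (Sh X')),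
      tri_iso f g h f' g' h' -> dist f g h -> dist f' g' h';
  dist_idm : forall X : Obj base,
      dist (idm X) (0 : Mor X zobj) (0 : Mor zobj (Sh X));
  cone : forall (X Y : Obj base), Mor X Y -> Obj base;
  cone_in : forall (X Y : Obj base) (f : Mor X Y), Mor Y (cone f);
  cone_out : forall (X Y : Obj base) (f : Mor X Y), Mor (cone f) (Sh X);
  cone_dist : forall (X Y : Obj base) (f : Mor X Y), dist f (cone_in f) (cone_out f);
  dist_rot : forall (X Y Z : Obj base) (f : Mor X Y) (g : Mor Y Z) (h : Mor Z (Sh X)),
      dist f g h <-> dist g h (- ShH f);
  dist_complete : forall (X Y Z X' Y' Z' : Obj base)
      (f : Mor X Y) (g : Mor Y Z) (h : Mor Z (Sh X))
      (f' : Mor X' Y') (g' : Mor Y' Z') (h' : Mor Z' (Sh X'))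
      (a : Mor X X') (b : Mor Y Y'),
      dist f g h -> dist f' g' h' -> comp b f = comp f' a ->
      exists c : Mor Z Z', comp c g = comp g' b /\ comp (ShH a) h = comp h' c;
  octahedral : forall (X Y Z Z' X' Y' : Obj base) (f : Mor X Y) (g : Mor Y Z)
      (i1 : Mor Y Z') (d1 : Mor Z' (Sh X))
      (i2 : Mor Z X') (d2 : Mor X' (Sh Y))
      (i3 : Mor Z Y') (d3 : Mor Y' (Sh X)),
      dist f i1 d1 -> dist g i2 d2 -> dist (comp g f) i3 d3 ->
      exists (u : Mor Z' Y') (v : Mor Y' X'),
        [/\ dist u v (comp (ShH i1) d2),
            comp u i1 = comp i3 g, comp d3 u = d1,
            comp v i3 = i2 & comp d2 v = comp (ShH f) d3]
}.

Arguments dist {_ X Y Z}.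
Arguments cone {_ X Y}.

(* Main.v *)
Require Import Defs.
From HB Require Import structures.
From mathcomp Require Import all_boot all_algebra.
From mathcomp Require Import all_classical all_reals.
From mathcomp Require Import lra.
Import GRing.Theory Num.Theory.
Local Open Scope ring_scope.

Set Implicit Arguments. Unset Strict Implicit. Unset Printing Implicit Defensive.

Section S.
Variable C : TriCat.
Implicit Types X Y Z V W : Obj C.
Local Notation comp := Defs.comp.
Local Notation dist := Defs.dist.
Local Notation bin1 := Defs.bin1.
Local Notation bin2 := Defs.bin2.
Local Notation bpr1 := Defs.bpr1.
Local Notation bpr2 := Defs.bpr2.
Local Notation cone := Defs.cone.

Lemma comp0l X Y Z (f : Mor X Y) : comp (0 : Mor Y Z) f = 0.
Proof.
have : comp (0 : Mor Y Z) f + comp 0 f = comp 0 f + 0 by rewrite -comp_addl !addr0.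
by move/addrI.
Qed.
Lemma comp0r X Y Z (g : Mor Y Z) : comp g (0 : Mor X Y) = 0.
Proof.
have : comp g (0 : Mor X Y) + comp g 0 = comp g 0 + 0 by rewrite -comp_addr !addr0.
by move/addrI.
Qed.
Lemma compNl X Y Z (g : Mor Y Z) (f : Mor X Y) : comp (- g) f = - comp g f.
Proof. by apply/eqP; rewrite -addr_eq0 -comp_addl addNr comp0l. Qed.
Lemma compNr X Y Z (g : Mor Y Z) (f : Mor X Y) : comp g (- f) = - comp g f.
Proof. by apply/eqP; rewrite -addr_eq0 -comp_addr addNr comp0r. Qed.
Lemma ShH0 X Y : ShH (0 : Mor X Y) = 0.
Proof.
have : ShH (0 : Mor X Y) + ShH 0 = ShH 0 + 0 by rewrite -ShH_add !addr0.
by move/addrI.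
Qed.
Lemma ShHN X Y (f : Mor X Y) : ShH (- f) = - ShH f.
Proof. by apply/eqP; rewrite -addr_eq0 -ShH_add addNr ShH0. Qed.

Lemma pr1in1R X Y V (r : Mor V X) : comp bpr1 (comp (bin1 : Mor X (bsum X Y)) r) = r.
Proof. by rewrite comp_assoc bpr1_in1 comp_idl. Qed.
Lemma pr2in2R X Y V (r : Mor V Y) : comp bpr2 (comp (bin2 : Mor Y (bsum X Y)) r) = r.
Proof. by rewrite comp_assoc bpr2_in2 comp_idl. Qed.
Lemma pr1in2R X Y V (r : Mor V Y) : comp bpr1 (comp (bin2 : Mor Y (bsum X Y)) r) = 0.
Proof. by rewrite comp_assoc bpr1_in2 comp0l. Qed.
Lemma pr2in1R X Y V (r : Mor V X) : comp bpr2 (comp (bin1 : Mor X (bsum X Y)) r) = 0.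
Proof. by rewrite comp_assoc bpr2_in1 comp0l. Qed.

Lemma idm_iso X : is_iso (idm X).
Proof. by exists (idm X); rewrite comp_idl. Qed.

Lemma dist_neg X Y Z (f : Mor X Y) (g : Mor Y Z) (h : Mor Z (Sh X)) :
  dist f g h -> dist (- f) (- g) h.
Proof.
apply: dist_iso; exists (idm X), (- idm Y), (idm Z); split; split.
- exact: idm_iso.
- by exists (- idm Y); rewrite compNl compNr opprK comp_idl.
- exact: idm_iso.
- by rewrite compNl comp_idl comp_idr.
- by rewrite compNr comp_idr comp_idl opprK.
- by rewrite ShH_id comp_idl comp_idr.
Qed.

Lemma dist_rot3 X Y Z (f : Mor X Y) (g : Mor Y Z) (h : Mor Z (Sh X)) :
  dist f g h -> dist (ShH f) (ShH g) (- ShH h).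
Proof.
move=> /dist_rot /dist_rot /dist_rot /dist_neg; by rewrite !opprK.
Qed.

Lemma dist_iso0 X Y (a : Mor X Y) : is_iso a ->
  dist a (0 : Mor Y zobj) (0 : Mor zobj (Sh X)).
Proof.
move=> ia; apply: (dist_iso _ (dist_idm X)).
exists (idm X), a, (idm zobj); split; split.
- exact: idm_iso.
- exact: ia.
- exact: idm_iso.
- by [].
- by rewrite comp0l comp0r.
- by rewrite comp0l comp0r.
Qed.

Lemma rot X Y Z (f : Mor X Y) (g : Mor Y Z) (h : Mor Z (Sh X)) :
  dist f g h -> dist g h (- ShH f).
Proof. exact: (proj1 (dist_rot f g h)). Qed.

Lemma zero_tri V : dist (0 : Mor zobj V) (idm V) (0 : Mor V (Sh zobj)).
Proof.
have [A [u [v [vu uv]]]] := Sh_esurj V.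
have T := rot (rot (dist_idm A)).
rewrite ShH0 oppr0 ShH_id in T.
apply: (dist_iso _ T).
exists (idm zobj), u, (- u); split; split.
- exact: idm_iso.
- by exists v.
- by exists (- v); rewrite !compNl !compNr !opprK; split.
- by rewrite comp0r comp0l.
- by rewrite compNl compNr opprK comp_idr comp_idl.
- by rewrite !comp0r comp0l.
Qed.

Lemma exact_co X Y Z V (f : Mor X Y) (g : Mor Y Z) (h : Mor Z (Sh X)) (x : Mor Y V) :
  dist f g h -> comp x f = 0 -> exists k : Mor Z V, x = comp k g.
Proof.
move=> T xf.
have H : comp x f = comp (0 : Mor zobj V) (0 : Mor X zobj) by rewrite comp0l.
have [c [c1 _]] := dist_complete T (zero_tri V) H.
by exists c; rewrite c1 comp_idl.
Qed.

Lemma SpR11 X Y V (r : Mor V (Sh X)) : comp (ShH bpr1) (comp (ShH (bin1 : Mor X (bsum X Y))) r) = r.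
Proof. by rewrite comp_assoc -ShH_comp bpr1_in1 ShH_id comp_idl. Qed.
Lemma SpR22 X Y V (r : Mor V (Sh Y)) : comp (ShH bpr2) (comp (ShH (bin2 : Mor Y (bsum X Y))) r) = r.
Proof. by rewrite comp_assoc -ShH_comp bpr2_in2 ShH_id comp_idl. Qed.
Lemma SpR12 X Y V (r : Mor V (Sh Y)) : comp (ShH bpr1) (comp (ShH (bin2 : Mor Y (bsum X Y))) r) = 0.
Proof. by rewrite comp_assoc -ShH_comp bpr1_in2 ShH0 comp0l. Qed.
Lemma SpR21 X Y V (r : Mor V (Sh X)) : comp (ShH bpr2) (comp (ShH (bin1 : Mor X (bsum X Y))) r) = 0.
Proof. by rewrite comp_assoc -ShH_comp bpr2_in1 ShH0 comp0l. Qed.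

Lemma iso_lr X Y (a : Mor X Y) l r : comp l a = idm X -> comp a r = idm Y -> is_iso a.
Proof.
move=> la ar; exists r; split => //.
have <- : l = r by rewrite -[l]comp_idr -ar comp_assoc la comp_idl.
done.
Qed.

Lemma unip_r X Y (a : Mor X Y) (b : Mor Y X) (M : Mor Y Y) :
  comp a b = idm Y + M -> comp M M = 0 -> comp a (comp b (idm Y - M)) = idm Y.
Proof.
move=> ab MM; rewrite comp_assoc ab !comp_addr !comp_addl !compNr !comp_idl !comp_idr MM.
by rewrite subr0 -addrA (@subrr (Mor Y Y)) addr0.
Qed.
Lemma unip_l X Y (a : Mor X Y) (b : Mor Y X) (N : Mor X X) :
  comp b a = idm X + N -> comp N N = 0 -> comp (comp (idm X - N) b) a = idm X.
Proof.
move=> ab NN; rewrite -comp_assoc ab !comp_addr !comp_addl !compNl !comp_idl !comp_idr NN.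
by rewrite subr0 -addrA (@addNr (Mor X X)) addr0.
Qed.

Ltac simp := do 4 rewrite ?comp_addl ?comp_addr ?compNl ?compNr ?comp0l ?comp0r
   -?comp_assoc ?ShH_comp ?ShH_add ?ShHN ?ShH0 ?ShH_id ?bpr1_in1 ?bpr2_in2
   ?bpr1_in2 ?bpr2_in1 ?pr1in1R ?pr2in2R ?pr1in2R ?pr2in1R ?SpR11 ?SpR22 ?SpR12 ?SpR21
   ?comp_idl ?comp_idr ?addr0 ?add0r ?oppr0.

Lemma dsum_cone X Y X' Y' (f : Mor X Y) (g : Mor X' Y') :
  exists phi : Mor (bsum (cone f) (cone g)) (cone (dsum_hom f g)), is_iso phi.
Proof.
set F := dsum_hom f g.
have T1 := cone_dist f; have T2 := cone_dist g; have T := cone_dist F.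
set g1 := cone_in f in T1; set h1 := cone_out f in T1.
set g2 := cone_in g in T2; set h2 := cone_out g in T2.
set U := cone_in F in T; set W := cone_out F in T.
have e1 : comp bin1 f = comp F (bin1 : Mor X (bsum X X')) by rewrite /F /dsum_hom; simp.
have [c1 [c1g c1h]] := dist_complete T1 T e1.
have e2 : comp bin2 g = comp F (bin2 : Mor X' (bsum X X')) by rewrite /F /dsum_hom; simp.
have [c2 [c2g c2h]] := dist_complete T2 T e2.
have e3 : comp bpr1 F = comp f (bpr1 : Mor (bsum X X') X) by rewrite /F /dsum_hom; simp.
have [d1 [d1g d1h]] := dist_complete T T1 e3.
have e4 : comp bpr2 F = comp g (bpr2 : Mor (bsum X X') X') by rewrite /F /dsum_hom; simp.
have [d2 [d2g d2h]] := dist_complete T T2 e4.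
pose phi := comp c1 (bpr1 : Mor (bsum (cone f) (cone g)) _) + comp c2 bpr2.
pose psi := comp (bin1 : Mor _ (bsum (cone f) (cone g))) d1 + comp bin2 d2.
pose G := dsum_hom g1 g2.
pose H := comp (ShH (bin1 : Mor X (bsum X X'))) (comp h1 (bpr1 : Mor (bsum (cone f) (cone g)) _))
        + comp (ShH (bin2 : Mor X' (bsum X X'))) (comp h2 bpr2).
have phiG : comp phi G = U.
  rewrite /phi /G /dsum_hom; simp.
  rewrite (comp_assoc c1) c1g (comp_assoc c2) c2g -!comp_assoc -comp_addr.
  by rewrite -{2}(comp_idr U) -(bsum_id Y Y').
have psiU : comp psi U = G.
  rewrite /psi /G /dsum_hom; simp; by rewrite d1g d2g.
have Hpsi : comp H psi = W.
  rewrite /psi /H; simp.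
  rewrite -d1h -d2h !comp_assoc -!ShH_comp -comp_addl -ShH_add.
  by rewrite -{2}(comp_idl W) -ShH_id -(bsum_id X X').
have Wphi : comp W phi = H.
  by rewrite /phi /H comp_addr !comp_assoc -c1h -c2h -!comp_assoc.
pose M := comp phi psi - idm (cone F).
have MU : comp M U = 0.
  rewrite /M comp_addl compNl -comp_assoc psiU phiG comp_idl.
  exact: (@addrN (Mor _ _)).
have WM : comp W M = 0.
  rewrite /M comp_addr compNr comp_assoc Wphi Hpsi comp_idr.
  exact: (@addrN (Mor _ _)).
have [k Mk] := exact_co (rot T) MU.
have MM : comp M M = 0 by rewrite {1}Mk -comp_assoc WM comp0r.
pose N := comp psi phi - idm (bsum (cone f) (cone g)).
have NG : comp N G = 0.
  rewrite /N comp_addl compNl -comp_assoc phiG psiU comp_idl.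
  exact: (@addrN (Mor _ _)).
have HN : comp H N = 0.
  rewrite /N comp_addr compNr comp_assoc Hpsi Wphi comp_idr.
  exact: (@addrN (Mor _ _)).
have Gin1 : comp G bin1 = comp bin1 g1 by rewrite /G /dsum_hom; simp.
have Gin2 : comp G bin2 = comp bin2 g2 by rewrite /G /dsum_hom; simp.
have N1 : comp (comp N bin1) g1 = 0 by rewrite -comp_assoc -Gin1 comp_assoc NG comp0l.
have N2 : comp (comp N bin2) g2 = 0 by rewrite -comp_assoc -Gin2 comp_assoc NG comp0l.
have [k1 Nk1] := exact_co (rot T1) N1.
have [k2 Nk2] := exact_co (rot T2) N2.
have NK : N = comp (comp k1 (ShH bpr1) + comp k2 (ShH bpr2)) H.
  rewrite /H; simp.
  rewrite !comp_assoc -Nk1 -Nk2 -!comp_assoc -comp_addr.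
  by rewrite -{1}(comp_idr N) -(bsum_id (cone f) (cone g)).
have NN : comp N N = 0 by rewrite {1}NK -comp_assoc HN comp0r.
exists phi.
apply: (iso_lr (l := comp (idm _ - N) psi) (r := comp psi (idm _ - M))).
- apply: unip_l NN; rewrite /N.
  by rewrite addrC -addrA (@addNr (Mor _ _)) addr0.
- apply: unip_r MM; rewrite /M.
  by rewrite addrC -addrA (@addNr (Mor _ _)) addr0.
Qed.

End S.

Section S2.
Variable C : TriCat.
Local Notation comp := Defs.comp.
Local Notation dist := Defs.dist.
Local Notation bin1 := Defs.bin1.
Local Notation bin2 := Defs.bin2.
Local Notation bpr1 := Defs.bpr1.
Local Notation bpr2 := Defs.bpr2.
Local Notation cone := Defs.cone.

Lemma idm_bsum0 (A B : Obj C) : idm A = 0 -> idm B = 0 -> idm (bsum A B) = 0.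
Proof.
move=> hA hB.
have e1 : (bpr1 : Mor (bsum A B) A) = 0 by rewrite -(comp_idl bpr1) hA comp0l.
have e2 : (bpr2 : Mor (bsum A B) B) = 0 by rewrite -(comp_idl bpr2) hB comp0l.
by rewrite -bsum_id e1 e2 !comp0r addr0.
Qed.

Lemma zero_iso (A B : Obj C) : idm A = 0 -> idm B = 0 -> is_iso (0 : Mor A B).
Proof. by move=> hA hB; exists 0; rewrite !comp0r hA hB. Qed.

Lemma iso_sym (A B : Obj C) (a : Mor A B) : is_iso a -> exists b : Mor B A, is_iso b.
Proof. by move=> [b [ba ab]]; exists b; exists a. Qed.

Lemma oct_cone (X Y Z Z' : Obj C) (f : Mor X Y) (g : Mor Y Z) (h : Mor Z (Sh X))
  (g' : Mor Y Z') (h' : Mor Z' (Sh X)) :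
  dist f g h -> dist f g' h' ->
  exists (u : Mor Z Z') (v : Mor Z' zobj) (w : Mor zobj (Sh Z)), dist u v w.
Proof.
move=> T T'.
have T'' : dist (comp (idm Y) f) g' h' by rewrite comp_idl.
have [u [v [D _ _ _ _]]] := octahedral T (dist_idm Y) T''.
by exists u, v, (comp (ShH g) 0).
Qed.
End S2.

Unset Implicit Arguments.

Theorem proposition2p4 (C : TriCat) (R : realType) :
  (* (1) morphism function -> object function *)
  (forall rho : forall X Y : Obj C, Mor X Y -> R,
     (forall (X Y : Obj C) (f : Mor X Y), 0 <= rho X Y f) ->
     (forall (X Y : Obj C) (f : Mor X Y), rho _ _ (ShH f) = rho X Y f) ->
     (forall (X Y X' Y' : Obj C) (f : Mor X Y) (g : Mor X' Y'),
        rho _ _ (dsum_hom f g) = rho X Y f + rho X' Y' g) ->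
     (forall (X Y Z : Obj C) (f : Mor X Y) (g : Mor Y Z) (h : Mor Z (Sh X)),
        dist f g h -> rho X Y f + rho Y Z g = rho Y Y (idm Y)) ->
     let rhoO := fun X : Obj C => rho X X (idm X) in
     [/\ (forall X : Obj C, 0 <= rhoO X),
         (forall X : Obj C, rhoO (Sh X) = rhoO X),
         (forall X Y : Obj C, rhoO (bsum X Y) = rhoO X + rhoO Y)
       & (forall (X Y Z : Obj C) (f : Mor X Y) (g : Mor Y Z) (h : Mor Z (Sh X)),
            dist f g h -> rhoO Y <= rhoO X + rhoO Z)]) /\
  (* (2) object function -> morphism function *)
  (forall rhoO : Obj C -> R,
     (forall X : Obj C, 0 <= rhoO X) ->
     (forall X : Obj C, rhoO (Sh X) = rhoO X) ->
     (forall X Y : Obj C, rhoO (bsum X Y) = rhoO X + rhoO Y) ->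
     (forall (X Y Z : Obj C) (f : Mor X Y) (g : Mor Y Z) (h : Mor Z (Sh X)),
        dist f g h -> rhoO Y <= rhoO X + rhoO Z) ->
     let rho := fun (X Y : Obj C) (f : Mor X Y) =>
                  (rhoO X + rhoO Y - rhoO (cone f)) / 2 in
     [/\ (forall (X Y : Obj C) (f : Mor X Y), 0 <= rho X Y f),
         (forall (X Y : Obj C) (f : Mor X Y), rho _ _ (ShH f) = rho X Y f),
         (forall (X Y X' Y' : Obj C) (f : Mor X Y) (g : Mor X' Y'),
            rho _ _ (dsum_hom f g) = rho X Y f + rho X' Y' g)
       & (forall (X Y Z : Obj C) (f : Mor X Y) (g : Mor Y Z) (h : Mor Z (Sh X)),
            dist f g h -> rho X Y f + rho Y Z g = rho Y Y (idm Y))]).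
Proof.
split.
- move=> rho r0 rSh rsum rtri rhoO; split.
  + by move=> X; apply: r0.
  + by move=> X; rewrite /rhoO -ShH_id rSh.
  + move=> X Y; rewrite /rhoO.
    have E : idm (bsum X Y) = dsum_hom (idm X) (idm Y).
      by rewrite /dsum_hom !comp_idl; symmetry; exact: bsum_id.
    by rewrite {1}E rsum.
  + move=> X Y Z f g h T; rewrite /rhoO -(rtri _ _ _ _ _ _ T).
    have A := rtri _ _ _ _ _ _ (rot T).
    have B := rtri _ _ _ _ _ _ (dist_neg (rot (rot T))).
    rewrite opprK rSh -ShH_id rSh in B.
    have := r0 _ _ h; have := r0 _ _ (- h); lra.
- move=> rhoO o0 oSh osum otri rho.
  have z0 : rhoO zobj = 0.
    have hW := idm_bsum0 (idm_bsum0 (zobj_id C) (zobj_id C)) (zobj_id C).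
    have D := dist_iso0 (zero_iso (zobj_id C) hW).
    have := otri _ _ _ _ _ _ D; rewrite !osum.
    have := o0 zobj; lra.
  have iso_eq : forall (X Y : Obj C) (a : Mor X Y), is_iso a -> rhoO X = rhoO Y.
    move=> X Y a ia; have [b ib] := iso_sym ia.
    have := otri _ _ _ _ _ _ (dist_iso0 ia); have := otri _ _ _ _ _ _ (dist_iso0 ib).
    rewrite z0; lra.
  have cone_eq : forall (X Y Z Z' : Obj C) (f : Mor X Y) (g : Mor Y Z) (h : Mor Z (Sh X))
      (g' : Mor Y Z') (h' : Mor Z' (Sh X)),
      dist f g h -> dist f g' h' -> rhoO Z = rhoO Z'.
    move=> X Y Z Z' f g h g' h' T T'.
    have [u [v [w D]]] := oct_cone T T'.
    have [u' [v' [w' D']]] := oct_cone T' T.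
    have := otri _ _ _ _ _ _ D; have := otri _ _ _ _ _ _ D'.
    rewrite z0; lra.
  split.
  + move=> X Y f; rewrite /rho.
    have := otri _ _ _ _ _ _ (rot (cone_dist f)); rewrite oSh => H.
    apply: divr_ge0; lra.
  + move=> X Y f; rewrite /rho !oSh.
    have E := cone_eq _ _ _ _ _ _ _ _ _ (cone_dist (ShH f)) (dist_rot3 (cone_dist f)).
    by rewrite E oSh.
  + move=> X Y X' Y' f g; rewrite /rho.
    have [phi iphi] := dsum_cone f g.
    rewrite -(iso_eq _ _ _ iphi) !osum; lra.
  + move=> X Y Z f g h T; rewrite /rho.
    have E1 := cone_eq _ _ _ _ _ _ _ _ _ (cone_dist f) T.
    have E2 := cone_eq _ _ _ _ _ _ _ _ _ (cone_dist g) (rot T).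
    have E3 := cone_eq _ _ _ _ _ _ _ _ _ (cone_dist (idm Y)) (dist_idm Y).
    rewrite E1 E2 E3 z0 oSh; lra.
Qed.
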